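(* Let $A$ be a Hopf algebra over a field $k$ admitting a Haar measure, and let $Z$ be an $A$-Galois extension. Then there exists a unique Haar measure on $Z$.
   Context: An $A$-Galois extension is a nonzero left $A$-comodule algebra $Z$ (coaction $\alpha_Z:Z\to A\otimes Z$ an algebra morphism) such that $(1_A\otimes m_Z)\circ(\alpha_Z\otimes 1_Z):Z\otimes Z\to A\otimes Z$ is bijective. A Haar measure on $Z$ is a linear map $\mu:Z\to k$ with $(1_A\otimes\mu)\circ\alpha_Z=u_A\circ\mu$ (where $u_A:k\to A$ is the unit) and $\mu(1_Z)=1$. A Haar measure on $A$ is a Haar measure on $A$ viewed as an $A$-Galois extension via $\Delta$, i.e. a linear $J:A\to k$ with $(1_A\otimes J)\Delta=u_A\circ J$ and $J(1)=1$. *)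

(* Defs.v *)
(* There is no tensor-product / Hopf-algebra library, so we
   encode (possibly infinite-dimensional) tensor products U (x) V over k by
   their standard construction: formal finite sums of pure tensors, i.e.
   sequences of pairs (concatenation = addition), modulo the congruence
   generated by commutativity of the sum and the bilinearity relations. *)
From HB Require Import structures.
From mathcomp Require Import all_boot all_order all_algebra.
Set Implicit Arguments. Unset Strict Implicit. Unset Printing Implicit Defensive.
Import GRing.Theory.
Local Open Scope ring_scope.

Inductive fcong (T : Type) (R : seq T -> seq T -> Prop) : seq T -> seq T -> Prop :=
| fc_gen s t : R s t -> fcong R s t
| fc_refl s : fcong R s s
| fc_sym s t : fcong R s t -> fcong R t s
| fc_trans s t u : fcong R s t -> fcong R t u -> fcong R s u
| fc_cat s s' t t' : fcong R s s' -> fcong R t t' -> fcong R (s ++ t) (s' ++ t')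
| fc_comm s t : fcong R (s ++ t) (t ++ s).

Section Tensors.
Variable k : fieldType.

Inductive tens2_rel (U V : lmodType k) : seq (U * V) -> seq (U * V) -> Prop :=
| t2_addl u u' v : tens2_rel [:: (u + u', v)] [:: (u, v); (u', v)]
| t2_addr u v v' : tens2_rel [:: (u, v + v')] [:: (u, v); (u, v')]
| t2_scale (c : k) u v : tens2_rel [:: (c *: u, v)] [:: (u, c *: v)]
| t2_zero v : tens2_rel [:: (0, v)] [::].

Definition teq2 (U V : lmodType k) := fcong (@tens2_rel U V).

Inductive tens3_rel (U V W : lmodType k) :
  seq (U * V * W) -> seq (U * V * W) -> Prop :=
| t3_add1 u u' v w : tens3_rel [:: (u + u', v, w)] [:: (u, v, w); (u', v, w)]
| t3_add2 u v v' w : tens3_rel [:: (u, v + v', w)] [:: (u, v, w); (u, v', w)]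
| t3_add3 u v w w' : tens3_rel [:: (u, v, w + w')] [:: (u, v, w); (u, v, w')]
| t3_scale12 (c : k) u v w : tens3_rel [:: (c *: u, v, w)] [:: (u, c *: v, w)]
| t3_scale23 (c : k) u v w : tens3_rel [:: (u, c *: v, w)] [:: (u, v, c *: w)]
| t3_zero v w : tens3_rel [:: (0, v, w)] [::].

Definition teq3 (U V W : lmodType k) := fcong (@tens3_rel U V W).

Definition tlinear (X U V : lmodType k) (f : X -> seq (U * V)) : Prop :=
  forall (c : k) (x y : X),
    teq2 (f (c *: x + y)) ([seq (c *: p.1, p.2) | p <- f x] ++ f y).

Definition tmultiplicative (X U V : algType k) (f : X -> seq (U * V)) : Prop :=
  (forall x y : X, teq2 (f (x * y)) [seq (p.1 * q.1, p.2 * q.2) | p <- f x, q <- f y])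
  /\ teq2 (f 1) [:: (1, 1)].

Definition klinear (X : lmodType k) (f : X -> k) : Prop :=
  forall (c : k) (x y : X), f (c *: x + y) = c * f x + f y.

Definition kmultiplicative (X : algType k) (f : X -> k) : Prop :=
  (forall x y : X, f (x * y) = f x * f y) /\ f 1 = 1.

Definition lin_endo (X : lmodType k) (f : X -> X) : Prop :=
  forall (c : k) (x y : X), f (c *: x + y) = c *: f x + f y.

Definition is_hopf_algebra (A : algType k) (Delta : A -> seq (A * A))
    (eps : A -> k) (S : A -> A) : Prop :=
  tlinear Delta /\ tmultiplicative Delta /\
      (* coassociativity: (Delta (x) 1) Delta = (1 (x) Delta) Delta *)
      (forall a : A,
        teq3 [seq (q.1, q.2, p.2) | p <- Delta a, q <- Delta p.1]
             [seq (p.1, q.1, q.2) | p <- Delta a, q <- Delta p.2]) /\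
      (klinear eps /\ kmultiplicative eps) /\
      (forall a : A, \sum_(p <- Delta a) eps p.1 *: p.2 = a
                   /\ \sum_(p <- Delta a) eps p.2 *: p.1 = a) /\
      lin_endo S /\
      (forall a : A, \sum_(p <- Delta a) S p.1 * p.2 = eps a *: 1
                   /\ \sum_(p <- Delta a) p.1 * S p.2 = eps a *: 1).

Definition is_comodule_algebra (A : algType k) (Delta : A -> seq (A * A))
    (eps : A -> k) (Z : algType k) (alpha : Z -> seq (A * Z)) : Prop :=
  [/\ tlinear alpha, tmultiplicative alpha,
      (* (Delta (x) 1) alpha = (1 (x) alpha) alpha *)
      (forall z : Z,
        teq3 [seq (q.1, q.2, p.2) | p <- alpha z, q <- Delta p.1]
             [seq (p.1, q.1, q.2) | p <- alpha z, q <- alpha p.2]) &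
      (forall z : Z, \sum_(p <- alpha z) eps p.1 *: p.2 = z)].

(* the Galois map (1 (x) m_Z)(alpha (x) 1) : Z (x) Z -> A (x) Z on representatives *)
Definition galois_map (A Z : algType k) (alpha : Z -> seq (A * Z))
    (s : seq (Z * Z)) : seq (A * Z) :=
  flatten [seq [seq (q.1, q.2 * p.2) | q <- alpha p.1] | p <- s].

(* A-Galois extension: nonzero comodule algebra with bijective Galois map
   (bijective on tensor classes; Z nonzero is built into algType = nzRing,
   but also stated explicitly) *)
Definition is_galois_extension (A : algType k) (Delta : A -> seq (A * A))
    (eps : A -> k) (Z : algType k) (alpha : Z -> seq (A * Z)) : Prop :=
  [/\ (1 : Z) != 0, is_comodule_algebra Delta eps alpha,
      (forall s t : seq (Z * Z),
          teq2 (galois_map alpha s) (galois_map alpha t) -> teq2 s t) &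
      (forall t : seq (A * Z), exists s : seq (Z * Z), teq2 (galois_map alpha s) t)].

Definition is_haar_measure (A : algType k) (Z : algType k)
    (alpha : Z -> seq (A * Z)) (mu : Z -> k) : Prop :=
  [/\ klinear mu,
      (forall z : Z, \sum_(p <- alpha z) mu p.2 *: p.1 = mu z *: (1 : A)) &
      mu 1 = 1].

End Tensors.

(* Main.v *)
From HB Require Import structures.
Require Import Defs.
From mathcomp Require Import all_boot all_order all_algebra.
Set Implicit Arguments. Unset Strict Implicit. Unset Printing Implicit Defensive.
Import GRing.Theory.
Local Open Scope ring_scope.


Lemma fcong_sum (T : Type) (R : seq T -> seq T -> Prop) (W : nmodType) (F : T -> W) :
  (forall s t, R s t -> \sum_(x <- s) F x = \sum_(x <- t) F x) ->
  forall s t, fcong R s t -> \sum_(x <- s) F x = \sum_(x <- t) F x.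
Proof.
move=> HR s t; elim => {s t}.
- exact: HR.
- by [].
- by move=> s t _ ->.
- by move=> s t u _ -> _ ->.
- by move=> s s' t t' _ E1 _ E2; rewrite !big_cat /= E1 E2.
- by move=> s t; rewrite !big_cat /= addrC.
Qed.

Lemma fcong_flatmap (T T' : Type) (R : seq T -> seq T -> Prop) (R' : seq T' -> seq T' -> Prop)
  (h : T -> seq T') :
  (forall s t, R s t -> fcong R' (flatten (map h s)) (flatten (map h t))) ->
  forall s t, fcong R s t -> fcong R' (flatten (map h s)) (flatten (map h t)).
Proof.
move=> HR s t; elim => {s t}.
- by move=> s t /HR.
- by move=> s; apply: fc_refl.
- by move=> s t _ H; apply: fc_sym.
- by move=> s t u _ H1 _ H2; apply: fc_trans H2.
- by move=> s s' t t' _ E1 _ E2; rewrite !map_cat !flatten_cat; apply: fc_cat.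
- by move=> s t; rewrite !map_cat !flatten_cat; apply: fc_comm.
Qed.

Lemma flatmap1 (T T' : Type) (g : T -> T') (s : seq T) :
  flatten (map (fun x => [:: g x]) s) = map g s.
Proof. by elim: s => //= x s ->. Qed.

Lemma fcong_map (T T' : Type) (R : seq T -> seq T -> Prop) (R' : seq T' -> seq T' -> Prop)
  (g : T -> T') :
  (forall s t, R s t -> fcong R' (map g s) (map g t)) ->
  forall s t, fcong R s t -> fcong R' (map g s) (map g t).
Proof.
move=> HR s t H; rewrite -(flatmap1 g s) -(flatmap1 g t); apply: (fcong_flatmap (R := R)) H.
by move=> s' t' /HR; rewrite (flatmap1 g s') (flatmap1 g t').
Qed.

Lemma fcong_cons (T : Type) (R : seq T -> seq T -> Prop) x s t :
  fcong R s t -> fcong R (x :: s) (x :: t).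
Proof. by move=> H; apply: (fc_cat (s := [:: x]) (s' := [:: x])) => //; apply: fc_refl. Qed.

Lemma fcong_flatten (T I : Type) (R : seq T -> seq T -> Prop) (F G : I -> seq T) (s : seq I) :
  (forall i, fcong R (F i) (G i)) ->
  fcong R (flatten (map F s)) (flatten (map G s)).
Proof.
move=> H; elim: s => [|i s IH] /=; first exact: fc_refl.
exact: fc_cat.
Qed.

Section Lin.
Variable k : fieldType.

Definition islin (X W : lmodType k) (F : X -> W) :=
  forall c x y, F (c *: x + y) = c *: F x + F y.

Lemma islin0 (X W : lmodType k) (F : X -> W) : islin F -> F 0 = 0.
Proof.
move=> H; have E := H 1 0 0.
rewrite scaler0 addr0 scale1r in E.
by apply: (@addrI _ (F 0)); rewrite addr0 -E.
Qed.

Lemma islinD (X W : lmodType k) (F : X -> W) : islin F -> forall x y, F (x + y) = F x + F y.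
Proof. by move=> H x y; have := H 1 x y; rewrite !scale1r. Qed.

Lemma islinZ (X W : lmodType k) (F : X -> W) : islin F -> forall c x, F (c *: x) = c *: F x.
Proof. by move=> H c x; rewrite -[c *: x]addr0 H (islin0 H) addr0. Qed.

Lemma islin_sum (X W : lmodType k) (F : X -> W) (I : Type) (r : seq I) (G : I -> X) :
  islin F -> F (\sum_(i <- r) G i) = \sum_(i <- r) F (G i).
Proof.
move=> H; elim: r => [|i r IH]; first by rewrite !big_nil (islin0 H).
by rewrite !big_cons (islinD H) IH.
Qed.

Lemma klin0 (X : lmodType k) (F : X -> k) : klinear F -> F 0 = 0.
Proof.
move=> H; have E := H 1 0 0.
rewrite scaler0 addr0 mul1r in E.
by apply: (@addrI _ (F 0)); rewrite addr0 -E.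
Qed.

Lemma klinD (X : lmodType k) (F : X -> k) : klinear F -> forall x y, F (x + y) = F x + F y.
Proof. by move=> H x y; have := H 1 x y; rewrite scale1r mul1r. Qed.

Lemma klinZ (X : lmodType k) (F : X -> k) : klinear F -> forall c x, F (c *: x) = c * F x.
Proof. by move=> H c x; rewrite -[c *: x]addr0 H (klin0 H) addr0. Qed.

Lemma klin_sum (X : lmodType k) (F : X -> k) (I : Type) (r : seq I) (G : I -> X) :
  klinear F -> F (\sum_(i <- r) G i) = \sum_(i <- r) F (G i).
Proof.
move=> H; elim: r => [|i r IH]; first by rewrite !big_nil (klin0 H).
by rewrite !big_cons (klinD H) IH.
Qed.

Definition bil (U V W : lmodType k) (B : U -> V -> W) :=
  (forall v, islin (B^~ v)) /\ (forall u, islin (B u)).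

Definition tril (U V X W : lmodType k) (T : U -> V -> X -> W) :=
  [/\ forall v x, islin (fun u => T u v x), forall u x, islin (fun v => T u v x)
    & forall u v, islin (T u v)].

Lemma teq2_sum (U V W : lmodType k) (B : U -> V -> W) (s t : seq (U * V)) :
  bil B -> teq2 s t -> \sum_(p <- s) B p.1 p.2 = \sum_(p <- t) B p.1 p.2.
Proof.
move=> [H1 H2]; apply: (fcong_sum (F := fun p : U * V => B p.1 p.2)).
move=> s' t' []; move=> *; rewrite ?big_cons ?big_nil /= ?addr0.
- exact: (islinD (H1 _)).
- exact: (islinD (H2 _)).
- by rewrite (islinZ (H1 _)) (islinZ (H2 _)).
- exact: (islin0 (H1 _)).
Qed.

Lemma teq3_sum (U V X W : lmodType k) (T : U -> V -> X -> W) (s t : seq (U * V * X)) :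
  tril T -> teq3 s t -> \sum_(p <- s) T p.1.1 p.1.2 p.2 = \sum_(p <- t) T p.1.1 p.1.2 p.2.
Proof.
move=> [H1 H2 H3]; apply: (fcong_sum (F := fun p : U * V * X => T p.1.1 p.1.2 p.2)).
move=> s' t' []; move=> *; rewrite ?big_cons ?big_nil /= ?addr0.
- exact: (islinD (H1 _ _)).
- exact: (islinD (H2 _ _)).
- exact: (islinD (H3 _ _)).
- by rewrite (islinZ (H1 _ _)) (islinZ (H2 _ _)).
- by rewrite (islinZ (H2 _ _)) (islinZ (H3 _ _)).
- exact: (islin0 (H1 _ _)).
Qed.

End Lin.


Section LinTools.
Variable k : fieldType.

Lemma islin_comp (X Y W : lmodType k) (F : Y -> W) (G : X -> Y) :
  islin F -> islin G -> islin (fun x => F (G x)).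
Proof. by move=> HF HG c x y; rewrite HG HF. Qed.

Lemma islin_id (X : lmodType k) : islin (fun x : X => x).
Proof. by []. Qed.

Lemma islin_mulr (A : algType k) (a : A) : islin (fun x : A => x * a).
Proof. by move=> c x y; rewrite mulrDl scalerAl. Qed.

Lemma islin_mull (A : algType k) (a : A) : islin (fun x : A => a * x).
Proof. by move=> c x y; rewrite mulrDr scalerAr. Qed.

Lemma islin_kscale (X W : lmodType k) (F : X -> k) (w : W) :
  klinear F -> islin (fun x => F x *: w).
Proof. by move=> H c x y; rewrite H scalerDl scalerA. Qed.

Lemma islin_scale (X W : lmodType k) (F : X -> W) (a : k) :
  islin F -> islin (fun x => a *: F x).
Proof. by move=> H c x y; rewrite H scalerDr !scalerA mulrC. Qed.

Lemma islin_sumf (X W : lmodType k) (I : Type) (r : seq I) (F : I -> X -> W) :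
  (forall i, islin (F i)) -> islin (fun x => \sum_(i <- r) F i x).
Proof.
move=> H c x y; rewrite scaler_sumr -big_split /=.
by apply: eq_bigr => i _; rewrite H.
Qed.

Lemma DS_islin (X U V W : lmodType k) (f : X -> seq (U * V)) (B : U -> V -> W) :
  tlinear f -> bil B -> islin (fun x => \sum_(p <- f x) B p.1 p.2).
Proof.
move=> Hf HB c x y; rewrite (teq2_sum HB (Hf c x y)) big_cat big_map /=.
congr (_ + _); rewrite scaler_sumr; apply: eq_bigr => p _.
by rewrite (islinZ (HB.1 _)).
Qed.

Lemma mult_sum (X U V : algType k) (W : lmodType k) (f : X -> seq (U * V)) (B : U -> V -> W) :
  tmultiplicative f -> bil B ->
  (forall x y, \sum_(p <- f (x * y)) B p.1 p.2 =
     \sum_(p <- f x) \sum_(q <- f y) B (p.1 * q.1) (p.2 * q.2)) /\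
  \sum_(p <- f 1) B p.1 p.2 = B 1 1.
Proof.
move=> [Hm H1] HB; split.
  by move=> x y; rewrite (teq2_sum HB (Hm x y)) big_allpairs_dep.
by rewrite (teq2_sum HB H1) big_cons big_nil addr0.
Qed.

Lemma coass_sum (A Z : algType k) (W : lmodType k) (Delta : A -> seq (A * A))
  (alpha : Z -> seq (A * Z)) (T : A -> A -> Z -> W) (z : Z) :
  tril T ->
  teq3 [seq (q.1, q.2, p.2) | p <- alpha z, q <- Delta p.1]
       [seq (p.1, q.1, q.2) | p <- alpha z, q <- alpha p.2] ->
  \sum_(p <- alpha z) \sum_(q <- Delta p.1) T q.1 q.2 p.2 =
  \sum_(p <- alpha z) \sum_(q <- alpha p.2) T p.1 q.1 q.2.
Proof.
move=> HT H; have := teq3_sum HT H.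
by rewrite !big_allpairs_dep.
Qed.

End LinTools.


Section Hopf.
Variables (k : fieldType) (A : algType k) (Delta : A -> seq (A * A)) (eps : A -> k) (S : A -> A).
Hypothesis HH : is_hopf_algebra Delta eps S.

Lemma H_lin : tlinear Delta. Proof. by case: HH. Qed.
Lemma H_mult : tmultiplicative Delta. Proof. by case: HH => _ []. Qed.
Lemma H_coass a : teq3 [seq (q.1, q.2, p.2) | p <- Delta a, q <- Delta p.1]
             [seq (p.1, q.1, q.2) | p <- Delta a, q <- Delta p.2].
Proof. by case: HH => _ [] _ []. Qed.
Lemma H_epslin : klinear eps. Proof. by case: HH => _ [] _ [] _ [] []. Qed.
Lemma H_epsmult : kmultiplicative eps. Proof. by case: HH => _ [] _ [] _ [] []. Qed.
Lemma H_counit1 a : \sum_(p <- Delta a) eps p.1 *: p.2 = a.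
Proof. by case: HH => _ [] _ [] _ [] _ [] /(_ a) []. Qed.
Lemma H_counit2 a : \sum_(p <- Delta a) eps p.2 *: p.1 = a.
Proof. by case: HH => _ [] _ [] _ [] _ [] /(_ a) []. Qed.
Lemma H_Slin : islin S. Proof. by case: HH => _ [] _ [] _ [] _ [] _ []. Qed.
Lemma H_anti1 a : \sum_(p <- Delta a) S p.1 * p.2 = eps a *: 1.
Proof. by case: HH => _ [] _ [] _ [] _ [] _ [] _ /(_ a) []. Qed.
Lemma H_anti2 a : \sum_(p <- Delta a) p.1 * S p.2 = eps a *: 1.
Proof. by case: HH => _ [] _ [] _ [] _ [] _ [] _ /(_ a) []. Qed.

Lemma DT (W : lmodType k) (C : A -> A -> W) : bil C -> forall y,
  \sum_(r <- Delta y) \sum_(s <- Delta r.1) \sum_(t <- Delta r.2)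
     C (s.1 * S t.2) (s.2 * S t.1) = eps y *: C 1 1.
Proof.
move=> [C1 C2] y.
pose T1 (a b c : A) := \sum_(s <- Delta a) C (s.1 * S c) (s.2 * S b).
have T1tril : tril T1.
  split.
  - move=> b c; apply: (DS_islin (B := fun u v => C (u * S c) (v * S b)) H_lin); split=> [v|u].
      exact: (islin_comp (C1 _) (islin_mulr _)).
    exact: (islin_comp (C2 _) (islin_mulr _)).
  - move=> a c; apply: islin_sumf => s.
    exact: (islin_comp (C2 _) (islin_comp (islin_mull _) H_Slin)).
  - move=> a b; apply: islin_sumf => s.
    exact: (islin_comp (fun u => C1 _ u) (islin_comp (islin_mull _) H_Slin)).
transitivity (\sum_(r <- Delta y) \sum_(t <- Delta r.2) T1 r.1 t.1 t.2).
  by apply: eq_bigr => r _; rewrite exchange_big.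
rewrite -(coass_sum T1tril (H_coass y)) /T1.
transitivity (\sum_(r <- Delta y) C (r.1 * S r.2) 1).
  apply: eq_bigr => r _.
  pose T2 (a b c : A) := C (a * S r.2) (b * S c).
  have T2tril : tril T2.
    split.
    - move=> b c; exact: (islin_comp (C1 _) (islin_mulr _)).
    - move=> a c; exact: (islin_comp (C2 _) (islin_mulr _)).
    - move=> a b; exact: (islin_comp (C2 _) (islin_comp (islin_mull _) H_Slin)).
  have := coass_sum T2tril (H_coass r.1); rewrite /T2 => ->.
  transitivity (\sum_(t <- Delta r.1) eps t.2 *: C (t.1 * S r.2) 1).
    apply: eq_bigr => t _.
    rewrite -(islin_sum _ _ (C2 _)) H_anti2.
    by rewrite (islinZ (C2 _)).
  have E := islin_sum (Delta r.1) (fun t => eps t.2 *: t.1) (islin_comp (C1 1) (islin_mulr (S r.2))).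
  rewrite /= H_counit2 in E; rewrite E.
  by apply: eq_bigr => t _; rewrite /= (islinZ (islin_comp (C1 1) (islin_mulr (S r.2)))).
rewrite -(islin_sum (Delta y) (fun r => r.1 * S r.2) (C1 1)) /= H_anti2.
by rewrite (islinZ (C1 _)).
Qed.


Lemma bil_mul (W : lmodType k) (B : A -> A -> W) (m1 m2 : A) :
  bil B -> bil (fun u v => B (u * m1) (v * m2)).
Proof.
move=> [B1 B2]; split=> [v|u].
  exact: (islin_comp (B1 _) (islin_mulr _)).
exact: (islin_comp (B2 _) (islin_mulr _)).
Qed.

Lemma anti (W : lmodType k) (B : A -> A -> W) : bil B -> forall x,
  \sum_(q <- Delta (S x)) B q.1 q.2 = \sum_(t <- Delta x) B (S t.2) (S t.1).
Proof.
move=> HB x; have [B1 B2] := HB.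
pose G x := \sum_(q <- Delta (S x)) B q.1 q.2.
have Glin : islin G := islin_comp (DS_islin H_lin HB) H_Slin.
pose H x := \sum_(t <- Delta x) B (S t.2) (S t.1).
have Hlin : islin H.
  apply: (DS_islin (B := fun u v => B (S v) (S u)) H_lin); split=> [v|u].
    exact: (islin_comp (B2 _) H_Slin).
  exact: (islin_comp (B1 _) H_Slin).
change (G x = H x).
have E := islin_sum (Delta x) (fun p => eps p.2 *: p.1) Glin.
rewrite /= H_counit2 in E; rewrite E.
pose T (a b c : A) := \sum_(s <- Delta b) \sum_(t <- Delta c) \sum_(q <- Delta (S a))
   B (q.1 * (s.1 * S t.2)) (q.2 * (s.2 * S t.1)).
have Ttril : tril T.
  split.
  - move=> b c; apply: islin_sumf => s; apply: islin_sumf => t.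
    exact: (islin_comp (DS_islin H_lin (bil_mul _ _ HB)) H_Slin).
  - move=> a c.
    apply: (DS_islin (B := fun u v => \sum_(t <- Delta c) \sum_(q <- Delta (S a))
       B (q.1 * (u * S t.2)) (q.2 * (v * S t.1))) H_lin); split=> [v|u].
      apply: islin_sumf => t; apply: islin_sumf => q.
      exact: (islin_comp (B1 _) (islin_comp (islin_mull _) (islin_mulr _))).
    apply: islin_sumf => t; apply: islin_sumf => q.
    exact: (islin_comp (B2 _) (islin_comp (islin_mull _) (islin_mulr _))).
  - move=> a b; apply: islin_sumf => s.
    apply: (DS_islin (B := fun u v => \sum_(q <- Delta (S a))
       B (q.1 * (s.1 * S v)) (q.2 * (s.2 * S u))) H_lin); split=> [v|u].
      apply: islin_sumf => q.
      exact: (islin_comp (B2 _) (islin_comp (islin_mull _) (islin_comp (islin_mull _) H_Slin))).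
    apply: islin_sumf => q.
    exact: (islin_comp (B1 _) (islin_comp (islin_mull _) (islin_comp (islin_mull _) H_Slin))).
transitivity (\sum_(p <- Delta x) \sum_(r <- Delta p.2) T p.1 r.1 r.2).
  apply: eq_bigr => p _; rewrite (islinZ Glin).
  pose Cw u v := \sum_(q <- Delta (S p.1)) B (q.1 * u) (q.2 * v).
  have Cwbil : bil Cw.
    split=> [v|u]; apply: islin_sumf => q.
      exact: (islin_comp (B1 _) (islin_mull _)).
    exact: (islin_comp (B2 _) (islin_mull _)).
  have E2 : G p.1 = Cw 1 1.
    by rewrite /G /Cw; apply: eq_bigr => q _; rewrite !mulr1.
  rewrite E2 -(DT Cwbil p.2); apply: eq_bigr => r _.
  by rewrite /T /Cw; apply: eq_bigr => s _.
rewrite -(coass_sum Ttril (H_coass x)).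
have E3 := islin_sum (Delta x) (fun p => eps p.1 *: p.2) Hlin.
rewrite /= H_counit1 in E3; rewrite E3.
apply: eq_bigr => p _; rewrite (islinZ Hlin).
rewrite /T /H.
set c := p.2.
transitivity (\sum_(t <- Delta c) \sum_(r <- Delta p.1)
   \sum_(q <- Delta (S r.1)) \sum_(s <- Delta r.2)
     B (q.1 * s.1 * S t.2) (q.2 * s.2 * S t.1)).
  rewrite exchange_big /=; apply: eq_bigr => t _.
  rewrite exchange_big /=; apply: eq_bigr => i1 _.
  rewrite exchange_big /=; apply: eq_bigr => i2 _.
  by apply: eq_bigr => i4 _; rewrite !mulrA.
rewrite scaler_sumr; apply: eq_bigr => t _.
pose Et u v := B (u * S t.2) (v * S t.1).
have Etbil : bil Et := bil_mul _ _ HB.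
have [Em E1] := mult_sum H_mult Etbil.
transitivity (\sum_(r <- Delta p.1) \sum_(q <- Delta (S r.1 * r.2)) Et q.1 q.2).
  by apply: eq_bigr => r _; rewrite Em.
rewrite -(islin_sum (Delta p.1) (fun r => S r.1 * r.2) (DS_islin H_lin Etbil)) /=.
rewrite H_anti1 (islinZ (DS_islin H_lin Etbil)) E1 /Et !mul1r.
by [].
Qed.


Lemma S1 : S 1 = 1.
Proof.
have Bb : bil (fun u v : A => S u * v).
  split=> [v|u]; first exact: (islin_comp (islin_mulr v) H_Slin).
  exact: islin_mull.
have [_ E] := mult_sum H_mult Bb.
by rewrite -[LHS]mulr1 -E H_anti1 H_epsmult.2 scale1r.
Qed.

Lemma rho_lin (J : A -> k) : klinear J -> klinear (fun x => J (S x)).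
Proof. by move=> HJ c x y; rewrite H_Slin HJ. Qed.

Lemma right_inv (J : A -> k) : is_haar_measure Delta J ->
  forall a, \sum_(p <- Delta a) J (S p.1) *: p.2 = J (S a) *: 1.
Proof.
move=> [HJ HI _] a.
have KEY x : \sum_(q <- Delta x) J (S q.1) *: S q.2 = J (S x) *: 1.
  have Bb : bil (fun u v : A => J v *: u).
    split=> [v|u]; first exact: islin_scale.
    exact: islin_kscale.
  by rewrite -HI (anti Bb).
pose T (a b c : A) := J (S a) *: (S b * c).
have Ttril : tril T.
  split.
  - by move=> b c; apply: islin_kscale; apply: rho_lin.
  - by move=> a' c; apply: islin_scale; apply: (islin_comp (islin_mulr c) H_Slin).
  - by move=> a' b; apply: islin_scale; apply: islin_mull.
have E := klin_sum (Delta a) (fun p => eps p.2 *: p.1) (rho_lin HJ).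
rewrite /= H_counit2 in E.
transitivity (\sum_(p <- Delta a) \sum_(q <- Delta p.1) T q.1 q.2 p.2).
  apply: eq_bigr => p _; rewrite /T.
  under eq_bigr do rewrite scalerAl.
  by rewrite -mulr_suml KEY -scalerAl mul1r.
rewrite (coass_sum Ttril (H_coass a)) E scaler_suml; apply: eq_bigr => p _.
rewrite /T -scaler_sumr H_anti1 (klinZ (rho_lin HJ)).
by rewrite scalerA mulrC.
Qed.

Lemma rho1 (J : A -> k) : is_haar_measure Delta J -> J (S 1) = 1.
Proof. by case=> _ _ H; rewrite S1. Qed.

End Hopf.


Section Tens.
Variable k : fieldType.

Definition tscale (U V : lmodType k) (c : k) (s : seq (U * V)) :=
  [seq (c *: p.1, p.2) | p <- s].

Lemma teq2_refl (U V : lmodType k) (s : seq (U * V)) : teq2 s s.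
Proof. exact: fc_refl. Qed.

Lemma teq2_scale (U V : lmodType k) (c : k) (s t : seq (U * V)) :
  teq2 s t -> teq2 (tscale c s) (tscale c t).
Proof.
apply: fcong_map => s' t' [] /=.
- by move=> u u' v; rewrite scalerDr; apply: fc_gen; apply: t2_addl.
- by move=> u v v'; apply: fc_gen; apply: t2_addr.
- move=> d u v; rewrite scalerA mulrC -scalerA; apply: fc_gen; apply: t2_scale.
- by move=> v; rewrite scaler0; apply: fc_gen; apply: t2_zero.
Qed.

Lemma teq2_mulr (U : lmodType k) (Z : algType k) (y : Z) (s t : seq (U * Z)) :
  teq2 s t -> teq2 [seq (p.1, p.2 * y) | p <- s] [seq (p.1, p.2 * y) | p <- t].
Proof.
apply: fcong_map => s' t' [] /=.
- by move=> u u' v; apply: fc_gen; apply: t2_addl.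
- by move=> u v v'; rewrite mulrDl; apply: fc_gen; apply: t2_addr.
- by move=> d u v; rewrite -scalerAl; apply: fc_gen; apply: t2_scale.
- by move=> v; apply: fc_gen; apply: t2_zero.
Qed.

Lemma teq2_swap (T : Type) (R : seq T -> seq T -> Prop) (x p : T) (a b : seq T) :
  fcong R (x :: (a ++ p :: b)) ([:: x; p] ++ (a ++ b)).
Proof.
have E : a ++ p :: b = (a ++ [:: p]) ++ b by rewrite -catA.
rewrite E; apply: (fc_cat (s := [:: x]) (s' := [:: x])); first exact: fc_refl.
change (fcong R ((a ++ [:: p]) ++ b) (([:: p] ++ a) ++ b)).
apply: fc_cat; last exact: fc_refl.
exact: fc_comm.
Qed.

Lemma teq2_cancel (U V : lmodType k) (s : seq (U * V)) : teq2 (tscale (-1) s ++ s) [::].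
Proof.
rewrite /tscale; elim: s => [|p s IH] /=; first exact: fc_refl.
apply: fc_trans (teq2_swap _ _ _ _ _) _.
apply: (fc_cat (s' := [::]) (t' := [::])) => //.
apply: fc_trans (_ : teq2 [:: ((-1) *: p.1 + p.1, p.2)] _).
  case: p => u v /=; apply: fc_sym; apply: fc_gen; apply: t2_addl.
rewrite scaleN1r addNr; apply: fc_gen; apply: t2_zero.
Qed.

Lemma collapse1 (U V : lmodType k) (I : Type) (r : seq I) (g : I -> U) (v : V) :
  teq2 [seq (g x, v) | x <- r] [:: (\sum_(x <- r) g x, v)].
Proof.
elim: r => [|x r IH] /=.
  by rewrite big_nil; apply: fc_sym; apply: fc_gen; apply: t2_zero.
rewrite big_cons.
apply: fc_trans (_ : teq2 [:: (g x, v); (\sum_(x <- r) g x, v)] _).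
  exact: fcong_cons.
apply: fc_sym; apply: fc_gen; apply: t2_addl.
Qed.

Lemma collapse2 (U V : lmodType k) (I : Type) (r : seq I) (u : U) (g : I -> V) :
  teq2 [seq (u, g x) | x <- r] [:: (u, \sum_(x <- r) g x)].
Proof.
elim: r => [|x r IH] /=.
  rewrite big_nil; apply: fc_sym.
  have H : teq2 [:: (0 *: u, (0 : V))] [:: (u, 0 *: (0 : V))].
    by apply: fc_gen; apply: t2_scale.
  rewrite scale0r scaler0 in H.
  by apply: fc_trans (fc_sym H) _; apply: fc_gen; apply: t2_zero.
rewrite big_cons.
apply: fc_trans (_ : teq2 [:: (u, g x); (u, \sum_(x <- r) g x)] _).
  exact: fcong_cons.
apply: fc_sym; apply: fc_gen; apply: t2_addr.
Qed.

Lemma tlin0 (X U V : lmodType k) (f : X -> seq (U * V)) : tlinear f -> teq2 (f 0) [::].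
Proof.
move=> Hf; have := Hf (-1) 0 0; rewrite scaler0 addr0 => H.
apply: fc_trans H _.
have := teq2_cancel (f 0); rewrite /tscale => H2.
apply: fc_trans H2; exact: fc_refl.
Qed.

Lemma tlinZ (X U V : lmodType k) (f : X -> seq (U * V)) c x : tlinear f ->
  teq2 (f (c *: x)) (tscale c (f x)).
Proof.
move=> Hf; have := Hf c x 0; rewrite addr0 => H; apply: fc_trans H _.
rewrite -[tscale c (f x)]cats0; apply: fc_cat; first exact: fc_refl.
exact: tlin0.
Qed.

Lemma tlin_sum (X U V : lmodType k) (f : X -> seq (U * V)) (I : Type) (r : seq I) (G : I -> X) :
  tlinear f -> teq2 (f (\sum_(i <- r) G i)) (flatten [seq f (G i) | i <- r]).
Proof.
move=> Hf; elim: r => [|i r IH] /=; first by rewrite big_nil; apply: tlin0.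
rewrite big_cons; have := Hf 1 (G i) (\sum_(j <- r) G j).
rewrite scale1r => H; apply: fc_trans H _.
apply: fc_cat => //.
have -> : [seq (1 *: p.1, p.2) | p <- f (G i)] = f (G i).
  by rewrite -[RHS]map_id; apply: eq_map => -[u v] /=; rewrite scale1r.
exact: fc_refl.
Qed.

End Tens.


Section Main.
Variables (k : fieldType) (A : algType k) (Delta : A -> seq (A * A)) (eps : A -> k) (S : A -> A).
Hypothesis HH : is_hopf_algebra Delta eps S.
Variables (J : A -> k) (Z : algType k) (alpha : Z -> seq (A * Z)).
Hypothesis HJ : is_haar_measure Delta J.
Hypothesis HG : is_galois_extension Delta eps alpha.

Lemma G_lin : tlinear alpha. Proof. by case: HG => _ []. Qed.
Lemma G_mult : tmultiplicative alpha. Proof. by case: HG => _ []. Qed.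
Lemma G_coass z : teq3 [seq (q.1, q.2, p.2) | p <- alpha z, q <- Delta p.1]
             [seq (p.1, q.1, q.2) | p <- alpha z, q <- alpha p.2].
Proof. by case: HG => _ []. Qed.
Lemma G_one : (1 : Z) != 0. Proof. by case: HG. Qed.
Lemma G_inj s t : teq2 (galois_map alpha s) (galois_map alpha t) -> teq2 s t.
Proof. by case: HG => _ _ H _; apply: H. Qed.

Lemma J_lin : klinear J. Proof. by case: HJ. Qed.

Definition rho x := J (S x).
Definition Pr z := \sum_(p <- alpha z) rho p.1 *: p.2.

Lemma rho_klin : klinear rho. Proof. exact: (rho_lin HH J_lin). Qed.

Lemma haar_Pr (mu : Z -> k) : is_haar_measure alpha mu -> forall z, mu (Pr z) = mu z.
Proof.
move=> [Hl Hi H1] z.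
rewrite /Pr (klin_sum _ _ Hl).
have := congr1 rho (Hi z).
have r1 : rho 1 = 1 := rho1 HH HJ.
rewrite (klin_sum _ _ rho_klin) (klinZ rho_klin (mu z) 1) r1 mulr1 => <-.
by apply: eq_bigr => p _; rewrite (klinZ Hl) (klinZ rho_klin) mulrC.
Qed.

Lemma coass_map z :
  teq2 [seq (rho q.1 *: q.2, p.2) | p <- alpha z, q <- Delta p.1]
       [seq (rho p.1 *: q.1, q.2) | p <- alpha z, q <- alpha p.2].
Proof.
pose g (x : A * A * Z) := (rho x.1.1 *: x.1.2, x.2).
have H := fcong_map (g := g) (R' := @tens2_rel k A Z) _ (G_coass z).
have E1 : [seq g x | x <- [seq (q.1, q.2, p.2) | p <- alpha z, q <- Delta p.1]] =
    [seq (rho q.1 *: q.2, p.2) | p <- alpha z, q <- Delta p.1].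
  by rewrite /= map_flatten -map_comp; congr flatten; apply: eq_map => p /=; rewrite -map_comp.
have E2 : [seq g x | x <- [seq (p.1, q.1, q.2) | p <- alpha z, q <- alpha p.2]] =
    [seq (rho p.1 *: q.1, q.2) | p <- alpha z, q <- alpha p.2].
  by rewrite /= map_flatten -map_comp; congr flatten; apply: eq_map => p /=; rewrite -map_comp.
rewrite -E1 -E2; apply: H => s t [] /=.
- by move=> u u' v w; rewrite /g /= (klinD rho_klin) scalerDl; apply: fc_gen; apply: t2_addl.
- by move=> u v v' w; rewrite /g /= scalerDr; apply: fc_gen; apply: t2_addl.
- by move=> u v w w'; rewrite /g /=; apply: fc_gen; apply: t2_addr.
- by move=> c u v w; rewrite /g /= (klinZ rho_klin) scalerA mulrC; apply: fc_refl.
- by move=> c u v w; rewrite /g /= scalerA mulrC -scalerA; apply: fc_gen; apply: t2_scale.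
- by move=> v w; rewrite /g /= (klin0 rho_klin) scale0r; apply: fc_gen; apply: t2_zero.
Qed.


Lemma Pr_coinv z : teq2 (alpha (Pr z)) [:: (1, Pr z)].
Proof.
rewrite /Pr.
apply: fc_trans (tlin_sum _ _ G_lin) _.
apply: fc_trans (_ : teq2 (flatten [seq tscale (rho p.1) (alpha p.2) | p <- alpha z]) _).
  by apply: fcong_flatten => p; apply: tlinZ G_lin.
apply: fc_trans (fc_sym (coass_map z)) _.
apply: fc_trans (_ : teq2 (flatten [seq [:: (\sum_(q <- Delta p.1) rho q.1 *: q.2, p.2)] | p <- alpha z]) _).
  by apply: fcong_flatten => p; apply: collapse1.
have E : [seq [:: (\sum_(q <- Delta p.1) rho q.1 *: q.2, p.2)] | p <- alpha z] =
         [seq [:: (rho p.1 *: 1, p.2)] | p <- alpha z].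
  by apply: eq_map => p; rewrite /rho (right_inv HH HJ).
rewrite E.
apply: fc_trans (_ : teq2 (flatten [seq [:: (1, rho p.1 *: p.2)] | p <- alpha z]) _).
  by apply: fcong_flatten => p; apply: fc_gen; apply: t2_scale.
rewrite flatmap1; exact: collapse2.
Qed.

Lemma haar_uniq (mu nu : Z -> k) : is_haar_measure alpha mu -> is_haar_measure alpha nu ->
  forall z, mu z = nu z.
Proof.
move=> Hmu Hnu z.
rewrite -(haar_Pr Hmu z) -(haar_Pr Hnu z).
set y := Pr z.
have Hy : teq2 (alpha y) [:: (1, y)] := Pr_coinv z.
have H : teq2 [:: (y, 1)] [:: (1, y)].
  apply: G_inj; rewrite /galois_map /= !cats0.
  apply: fc_trans (_ : teq2 (alpha y) _).
    have -> : [seq (q.1, q.2 * 1) | q <- alpha y] = alpha y.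
      by rewrite -[RHS]map_id; apply: eq_map => -[u v] /=; rewrite mulr1.
    exact: fc_refl.
  apply: fc_trans Hy _.
  have := teq2_mulr y G_mult.2; rewrite /= mul1r => H2.
  exact: fc_sym.
case: Hmu => Lmu _ mu1; case: Hnu => Lnu _ nu1.
have Bb : bil (fun u v : Z => (mu u * nu v) *: (1 : Z)).
  split=> [v|u]; apply: islin_kscale => c a b.
    by rewrite Lmu mulrDl mulrA.
  by rewrite Lnu mulrDr !mulrA [u in _ = u * _ + _]mulrC [mu u * c]mulrC.
have := teq2_sum Bb H; rewrite !big_cons !big_nil !addr0 /= mu1 nu1 mulr1 mul1r.
move/eqP; rewrite -subr_eq0 -scalerBl scaler_eq0 (negbTE G_one) orbF subr_eq0.
by move/eqP.
Qed.

Definition Pl z := \sum_(p <- alpha z) J p.1 *: p.2.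

Lemma Pl_lin : islin Pl.
Proof.
apply: (DS_islin (B := fun u v => J u *: v) G_lin); split=> [v|u].
  exact: (islin_kscale _ J_lin).
by move=> c x y; rewrite scalerDr !scalerA mulrC.
Qed.

Lemma haar_exists (f : Z -> k) : klinear f -> f 1 = 1 ->
  is_haar_measure alpha (fun z => f (Pl z)).
Proof.
move=> Hf f1; split.
- by move=> c x y; rewrite Pl_lin Hf.
- move=> z.
  pose T (a b : A) (c : Z) := (J b * f c) *: a.
  have Ttril : tril T.
    split.
    - by move=> b c d x y; rewrite /T scalerDr !scalerA mulrC.
    - move=> a c; apply: islin_kscale => d x y.
      by rewrite J_lin mulrDl mulrA.
    - move=> a b; apply: islin_kscale => d x y.
      by rewrite Hf mulrDr !mulrA [J b * d]mulrC.
  transitivity (\sum_(p <- alpha z) \sum_(q <- alpha p.2) T p.1 q.1 q.2).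
    apply: eq_bigr => p _; rewrite /Pl (klin_sum _ _ Hf) scaler_suml.
    by apply: eq_bigr => q _; rewrite (klinZ Hf).
  rewrite -(coass_sum Ttril (G_coass z)).
  rewrite /Pl (klin_sum _ _ Hf) scaler_suml; apply: eq_bigr => p _.
  rewrite /T.
  under eq_bigr do rewrite mulrC -scalerA.
  rewrite -scaler_sumr.
  have [_ HI _] := HJ; rewrite HI (klinZ Hf) scalerA.
  by rewrite mulrC.
- have Bb : bil (fun (u : A) (v : Z) => J u *: v).
    split=> [v|u]; first exact: (islin_kscale _ J_lin).
    by move=> c x y; rewrite scalerDr !scalerA mulrC.
  have [_ E] := mult_sum G_mult Bb.
  by rewrite /Pl E; have [_ _ ->] := HJ; rewrite scale1r.
Qed.

End Main.

From mathcomp Require Import boolp classical_sets.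
Section Classical.
Local Open Scope classical_set_scope.
Lemma exists_functional (k : fieldType) (Z : lmodType k) (e : Z) :
  e != 0 -> exists f : Z -> k, klinear f /\ f e = 1.
Proof.
move=> e0.
pose P (M : set Z) := [/\ forall x y, M x -> M y -> M (x + y),
  forall c x, M x -> M (c *: x) & ~ M e].
have [M [[MD MZ Me] Mmax]] : exists M, P M /\ forall B, M `<` B -> ~ P B.
  apply: Zorn_bigcup => F FP Ftot; split.
  - move=> x y [X FX Xx] [Y FY Yy].
    have [XY|YX] := Ftot X Y FX FY.
      by exists Y => //; have [+ _ _] := FP Y FY; apply => //; apply: XY.
    by exists X => //; have [+ _ _] := FP X FX; apply => //; apply: YX.
  - move=> c x [X FX Xx]; exists X => //.
    by have [_ + _] := FP X FX; apply.
  - by move=> [X FX Xe]; have [_ _] := FP X FX; apply.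
have M0 : M 0.
  apply: contrapT => nM0.
  apply: (Mmax (M `|` [set 0])).
    split; first by move=> x Mx; left.
    by move=> H; apply: nM0; apply: H; right.
  split.
  - move=> x y [Mx|->] [My|->]; rewrite ?addr0 ?add0r; try by left.
      by left; apply: MD.
    by right.
  - move=> c x [Mx|->]; first by left; apply: MZ.
    by right; rewrite scaler0.
  - by move=> [//|/eqP]; rewrite (negbTE e0).
have Mex z : exists c, M (z - c *: e).
  apply: contrapT => nex.
  have nex' c : ~ M (z - c *: e) by move=> H; apply: nex; exists c.
  pose B := [set x | exists m c, M m /\ x = m + c *: z].
  apply: (Mmax B).
    split; first by move=> x Mx; exists x, 0; rewrite scale0r addr0.
    move=> H; apply: (nex' 0); rewrite scale0r subr0; apply: H.
    by exists 0, 1; rewrite add0r scale1r.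
  split.
  - move=> x y [m1 [c1 [M1 ->]]] [m2 [c2 [M2 ->]]].
    exists (m1 + m2), (c1 + c2); split; first exact: MD.
    by rewrite scalerDl addrACA.
  - move=> c x [m [d [Mm ->]]]; exists (c *: m), (c * d); split; first exact: MZ.
    by rewrite scalerDr scalerA.
  - move=> [m [c [Mm Em]]].
    have [c0|cn0] := eqVneq c 0.
      by apply: Me; move: Em; rewrite c0 scale0r addr0 => ->.
    apply: (nex' c^-1).
    have -> : z - c^-1 *: e = (- c^-1) *: m.
      rewrite Em scalerDr scalerA mulVf // scale1r scaleNr.
      by rewrite opprD addrCA subrr addr0.
    exact: MZ.
have Muniq z c d : M (z - c *: e) -> M (z - d *: e) -> c = d.
  move=> Hc Hd; have [//|cd] := eqVneq c d; exfalso.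
  have dc : d - c != 0 by rewrite subr_eq0 eq_sym.
  have H1 : M ((d - c) *: e).
    have -> : (d - c) *: e = (z - c *: e) + (-1) *: (z - d *: e).
      by rewrite scaleN1r opprB scalerBl [RHS]addrC addrA subrK.
    by apply: MD => //; apply: MZ.
  by apply: Me; have := MZ (d - c)^-1 _ H1; rewrite scalerA mulVf // scale1r.

pose f z := proj1_sig (cid (Mex z)).
have fP z : M (z - f z *: e) := proj2_sig (cid (Mex z)).
exists f; split.
  move=> c x y; apply: (Muniq (c *: x + y)) (fP _) _.
  have -> : c *: x + y - (c * f x + f y) *: e =
      c *: (x - f x *: e) + (y - f y *: e).
    by rewrite scalerDl -scalerA scalerBr opprD addrACA.
  by apply: MD => //; apply: MZ.
by apply: (Muniq e) (fP e) _; rewrite scale1r subrr.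
Qed.

End Classical.

Local Close Scope ring_scope.

Theorem proposition4p2p2 (k : fieldType) (A : algType k)
    (Delta : A -> seq (A * A)) (eps : A -> k) (S : A -> A) :
  is_hopf_algebra Delta eps S ->
  (exists J : A -> k, is_haar_measure Delta J) ->
  forall (Z : algType k) (alpha : Z -> seq (A * Z)),
    is_galois_extension Delta eps alpha ->
    exists! mu : Z -> k, is_haar_measure alpha mu.
Proof.
move=> HH [J HJ] Z alpha HG.
have [f [Hf f1]] := exists_functional (G_one HG).
exists (fun z => f (Pl J alpha z)); split.
  exact: (haar_exists HJ HG Hf f1).
move=> nu Hnu; apply: funext => z.
exact: (haar_uniq HH HJ HG (haar_exists HJ HG Hf f1) Hnu).
Qed.
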